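(* Let $H=(A,B;E)$ be a bipartite graph with parts $A,B$, let $n_1=|A|$, $n_2=|B|$, and let $\alpha=|E|/(n_1n_2)$ be its edge density. Then $H$ contains a $K_p^{(3)}$-immersion for every $p\in\mathbb{N}$ with $p\leq\min\{\alpha n_1/16,\ \alpha^2 n_2/192\}$.
   Context: An $H'$-immersion in a graph $G$ is an injective map $\phi:V(H')\to V(G)$ with, for each $uv\in E(H')$, a $\phi(u)$–$\phi(v)$ path $P_{uv}$ in $G$, the paths pairwise edge-disjoint; a $K_p^{(3)}$-immersion is a $K_p$-immersion in which every path $P_{uv}$ has length exactly $4$. *)

(* Defs.v *)
From mathcomp Require Import all_boot all_order all_algebra.
Set Implicit Arguments. Unset Strict Implicit. Unset Printing Implicit Defensive.

(* A graph on a finite vertex type T is given by its adjacency relation g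
   (assumed symmetric and irreflexive where it matters; edges are unordered). *)

Definition walk_edges (T : finType) (x : T) (s : seq T) : seq {set T} :=
  [seq [set uv.1; uv.2] | uv <- zip (x :: s) s].

Definition is_path_len (T : finType) (g : rel T) (k : nat) (x y : T) (s : seq T) : Prop :=
  [/\ path g x s, last x s = y, size s = k & uniq (x :: s)].

Definition Kp_immersion_len (T : finType) (g : rel T) (k p : nat) : Prop :=
  exists phi : 'I_p -> T, injective phi /\
  exists P : 'I_p -> 'I_p -> seq T,
    (forall i j : 'I_p, i < j -> is_path_len g k (phi i) (phi j) (P i j)) /\
    (forall i j i' j' : 'I_p, i < j -> i' < j' -> (i, j) != (i', j') ->
       forall ed, ed \in walk_edges (phi i) (P i j) ->
                  ed \notin walk_edges (phi i') (P i' j')).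

(* K_p^{(3)}-immersion: every path has length exactly 4. *)
Definition K3_immersion (T : finType) (g : rel T) (p : nat) : Prop :=
  Kp_immersion_len g 4 p.

Definition bip_adj (A B : finType) (E : {set A * B}) : rel (A + B)%type :=
  fun u v => match u, v with
             | inl a, inr b => (a, b) \in E
             | inr b, inl a => (a, b) \in E
             | _, _ => false
             end.

(* Main.v *)
Require Import Defs.
From mathcomp Require Import all_boot all_order all_algebra zify.
From mathcomp Require Import ring.
Set Implicit Arguments. Unset Strict Implicit. Unset Printing Implicit Defensive.

Lemma card_sum (T : finType) (P : pred T) : #|[set x | P x]| = \sum_x (P x : nat).
Proof.
rewrite -sum1_card big_mkcond /=; apply: eq_bigr => x _; rewrite inE; by case: (P x).
Qed.

Lemma sq_le (a b : nat) : 2 * (a * b) <= a * a + b * b.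
Proof. case: (leqP a b) => h; nia. Qed.

Lemma CS (I : finType) (F : I -> nat) :
  (\sum_i F i) * (\sum_i F i) <= #|I| * \sum_i (F i * F i).
Proof.
have E1 : (\sum_i F i) * (\sum_i F i) = \sum_i \sum_j (F i * F j).
  rewrite big_distrl /=; apply: eq_bigr => i _; by rewrite big_distrr.
have E2 : \sum_i \sum_j (F i * F i + F j * F j) = 2 * (#|I| * \sum_i (F i * F i)).
  have C : forall c, \sum_(j : I) c = #|I| * c.
    by move=> c; rewrite big_const iter_addn_0 mulnC.
  rewrite (eq_bigr (fun i => #|I| * (F i * F i) + \sum_j (F j * F j))); last first.
    by move=> i _; rewrite big_split /= C.
  by rewrite big_split /= -big_distrr /= C mul2n -addnn.
rewrite -(leq_pmul2l (isT : 0 < 2)) E1 -E2 big_distrr /=.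
apply: leq_sum => i _; rewrite big_distrr /=; apply: leq_sum => j _.
exact: sq_le.
Qed.

Lemma sum_count (T : Type) (s : seq T) (P : pred T) :
  \sum_(x <- s) (P x : nat) = count P s.
Proof. by elim: s => [|x s IH]; rewrite ?big_nil ?big_cons ?IH. Qed.

Section Greedy.
Variables (A B : finType) (E : {set A * B}).

Definition Nb (a : A) : {set B} := [set b | (a, b) \in E].
Definition codeg (x y : A) := #|Nb x :&: Nb y|.

Variables (p : nat) (phi : 'I_p -> A).

Definition Ed (a : A) (q : 'I_p * 'I_p) (t : B * A * B) : seq B :=
  (if a == phi q.1 then [:: t.1.1] else [::]) ++
  (if a == t.1.2 then [:: t.1.1; t.2] else [::]) ++
  (if a == phi q.2 then [:: t.2] else [::]).

Definition used (g : 'I_p * 'I_p -> B * A * B) (ps : seq ('I_p * 'I_p)) (a : A) :=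
  flatten [seq Ed a q (g q) | q <- ps].

Definition valid (q : 'I_p * 'I_p) (t : B * A * B) :=
  [&& (phi q.1, t.1.1) \in E, (t.1.2, t.1.1) \in E, (t.1.2, t.2) \in E,
      (phi q.2, t.2) \in E & t.1.1 != t.2] /\ forall k, t.1.2 != phi k.

Lemma size_used g ps a :
  size (used g ps a) = \sum_(q <- ps) size (Ed a q (g q)).
Proof.
elim: ps => [|q ps IH]; first by rewrite big_nil.
by rewrite /used /= size_cat big_cons -IH.
Qed.

Lemma count_fst_le (ps : seq ('I_p * 'I_p)) (k : 'I_p) :
  uniq ps -> count (fun q => q.1 == k) ps <= p.
Proof.
move=> U.
have -> : count (fun q => q.1 == k) ps = size [seq q.2 | q <- ps & q.1 == k].
  by rewrite size_map size_filter.
have U2 : uniq [seq q.2 | q <- ps & q.1 == k].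
  rewrite map_inj_in_uniq ?filter_uniq //.
  move=> [a1 a2] [b1 b2]; rewrite !mem_filter /= => /andP[/eqP -> _] /andP[/eqP -> _].
  by move=> ->.
move/card_uniqP: U2 => <-.
by apply: leq_trans (max_card _) _; rewrite card_ord.
Qed.

Lemma count_snd_le (ps : seq ('I_p * 'I_p)) (k : 'I_p) :
  uniq ps -> count (fun q => q.2 == k) ps <= p.
Proof.
move=> U.
have -> : count (fun q => q.2 == k) ps = size [seq q.1 | q <- ps & q.2 == k].
  by rewrite size_map size_filter.
have U2 : uniq [seq q.1 | q <- ps & q.2 == k].
  rewrite map_inj_in_uniq ?filter_uniq //.
  move=> [a1 a2] [b1 b2]; rewrite !mem_filter /= => /andP[/eqP -> _] /andP[/eqP -> _].
  by move=> ->.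
move/card_uniqP: U2 => <-.
by apply: leq_trans (max_card _) _; rewrite card_ord.
Qed.

Hypothesis phi_inj : injective phi.

Lemma size_used_term g ps k :
  uniq ps -> (forall q, q \in ps -> valid q (g q)) -> size (used g ps (phi k)) <= 2 * p.
Proof.
move=> U V; rewrite size_used.
have -> : \sum_(q <- ps) size (Ed (phi k) q (g q)) =
          \sum_(q <- ps) ((q.1 == k) + (q.2 == k)).
  rewrite big_seq_cond [RHS]big_seq_cond; apply: eq_bigr => q /andP[qin _].
  have [_ Hz] := V q qin.
  rewrite /Ed !size_cat !(inj_eq phi_inj) [phi k == _]eq_sym (negbTE (Hz k)) /=.
  by rewrite [k == _]eq_sym [k == q.2]eq_sym; case: (q.1 == k); case: (q.2 == k).
rewrite big_split /= !sum_count.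
by rewrite mul2n -addnn leq_add ?count_fst_le ?count_snd_le.
Qed.
Lemma size_used_mid g ps z :
  (forall k, z != phi k) ->
  size (used g ps z) = 2 * count (fun q => (g q).1.2 == z) ps.
Proof.
move=> Hz; rewrite size_used -sum_count big_distrr /=.
apply: eq_bigr => q _.
rewrite /Ed !size_cat (negbTE (Hz q.1)) (negbTE (Hz q.2)) /= addn0 [z == _]eq_sym.
by case: (_ == z).
Qed.

Lemma in_used g ps a q b : q \in ps -> b \in Ed a q (g q) -> b \in used g ps a.
Proof. by move=> qin bin; apply/flatten_mapP; exists q. Qed.

Lemma uniq_size_le (ps : seq ('I_p * 'I_p)) : uniq ps -> size ps <= p * p.
Proof.
move/card_uniqP => <-; apply: leq_trans (max_card _) _.
by rewrite card_prod card_ord.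
Qed.

Lemma exists_notin (X : {set B}) (s : seq B) : size s < #|X| -> exists2 b, b \in X & b \notin s.
Proof.
move=> H; case: (boolP [exists b in X, b \notin s]) => [/exists_inP//|/exists_inPn Hall].
have : X \subset s by apply/subsetP => b /Hall; rewrite negbK.
move/subset_leq_card => H2.
by move: (leq_trans H2 (card_size s)); rewrite leqNgt H.
Qed.

Lemma cardU_le (T : finType) (X Y : {set T}) : #|X :|: Y| <= #|X| + #|Y|.
Proof. by rewrite -cardsUI leq_addr. Qed.

Lemma sum_count_eq (T : finType) (I : Type) (f : I -> T) (ps : seq I) :
  \sum_(z : T) count (fun q => f q == z) ps = size ps.
Proof.
elim: ps => [|q ps IH] /=; first by rewrite big1.
rewrite big_split /= IH (bigD1 (f q)) //= eqxx big1 // => z; rewrite eq_sym.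
by move/negbTE => ->.
Qed.

Definition Bad (S : {set A}) (x : A) := [set y in S | codeg x y < 8 * p].

Lemma codegC x y : codeg x y = codeg y x.
Proof. by rewrite /codeg setIC. Qed.

Lemma mid_exists (S : {set A}) (x y : A) (f : 'I_p * 'I_p -> A) ps :
  0 < p -> 11 * p <= #|S| -> 6 * #|Bad S x| <= #|S| -> 6 * #|Bad S y| <= #|S| ->
  size ps <= p * p ->
  exists z, [/\ (forall k, z != phi k), 8 * p <= codeg x z,
    8 * p <= codeg z y & count (fun q => f q == z) ps < 2 * p].
Proof.
move=> p0 HS Hx Hy Hps.
set Over := [set z | 2 * p <= count (fun q => f q == z) ps].
have HO : #|Over| * (2 * p) <= size ps.
  rewrite -(sum_count_eq f ps) -sum_nat_const.
  apply: (@leq_trans (\sum_(z in Over) count (fun q => f q == z) ps)).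
    by apply: leq_sum => z; rewrite inE.
  by rewrite [X in _ <= X](bigID (mem Over)) /= leq_addr.
set Tm := [set phi k | k : 'I_p].
have HT : #|Tm| <= p by apply: leq_trans (leq_imset_card _ _) _; rewrite card_ord.
set U := Tm :|: Bad S x :|: Bad S y :|: Over.
have HU : #|U| <= #|Tm| + #|Bad S x| + #|Bad S y| + #|Over|.
  by apply: leq_trans (cardU_le _ _) _; rewrite leq_add2r;
     apply: leq_trans (cardU_le _ _) _; rewrite leq_add2r cardU_le.
have : 0 < #|S :\: U|.
  have := cardsID U S; have := subset_leq_card (subsetIr S U).
  nia.
case/card_gt0P => z; rewrite in_setD !in_setU !negb_or => /andP[/andP[/andP[/andP[zT zx] zy] zO] zS].
exists z; split.
- by move=> k; apply: contra zT => /eqP ->; apply: imset_f.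
- by move: zx; rewrite inE zS /= -leqNgt.
- by move: zy; rewrite inE zS /= -leqNgt codegC.
- by move: zO; rewrite inE ltnNge.
Qed.

Variable t0 : B * A * B.

Hypothesis Hmid : forall (i j : 'I_p) (f : 'I_p * 'I_p -> A) (ps : seq ('I_p * 'I_p)),
  size ps <= p * p -> exists z, [/\ (forall k, z != phi k), 8 * p <= codeg (phi i) z,
    8 * p <= codeg z (phi j) & count (fun q => f q == z) ps < 2 * p].

Lemma greedy ps : uniq ps -> exists g : 'I_p * 'I_p -> B * A * B,
  [/\ (forall q, q \in ps -> valid q (g q)),
      (forall q q', q \in ps -> q' \in ps -> q != q' ->
         forall a b, b \in Ed a q (g q) -> b \notin Ed a q' (g q')) &
      (forall z, (forall k, z != phi k) -> count (fun q => (g q).1.2 == z) ps <= 2 * p)].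
Proof.
elim: ps => [|q ps IH].
  by move=> _; exists (fun _ => t0); split.
rewrite cons_uniq => /andP[qnin U].
have [g [V D C]] := IH U.
case: q qnin => i j qnin.
have [z [Hz Hxz Hzy Cz]] := Hmid i j (fun q => (g q).1.2) (uniq_size_le U).
have p0 : 0 < p by apply: leq_ltn_trans (ltn_ord i).
have Sx := size_used_term i U V.
have Sy := size_used_term j U V.
have Sz := size_used_mid g ps Hz.
have [b bin bnin] : exists2 b, b \in Nb (phi i) :&: Nb z & b \notin used g ps (phi i) ++ used g ps z.
  apply: exists_notin; rewrite size_cat Sz; apply: leq_trans Hxz.
  lia.
have [b' b'in b'nin] : exists2 b', b' \in Nb z :&: Nb (phi j) & b' \notin b :: used g ps (phi j) ++ used g ps z.
  apply: exists_notin; rewrite /= size_cat Sz; apply: leq_trans Hzy.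
  lia.
set g' := fun q => if q == (i, j) then (b, z, b') else g q.
have g'ps : forall q, q \in ps -> g' q = g q.
  move=> q qin; rewrite /g'; case: eqP => // E'; by rewrite -E' qin in qnin.
have g'q : g' (i, j) = (b, z, b') by rewrite /g' eqxx.
have newd : forall a b0, b0 \in Ed a (i, j) (b, z, b') -> b0 \in used g ps a -> False.
  move=> a b0 H Hu.
  have : [|| (a == phi i) && (b0 == b), (a == z) && ((b0 == b) || (b0 == b')) |
           (a == phi j) && (b0 == b')].
    move: H; rewrite /Ed /= !mem_cat.
    by case: (a == phi i); case: (a == z); case: (a == phi j); rewrite /= ?inE ?orbF.
  case/or3P => /andP[/eqP Ea]; subst a.
  - by move/eqP => Eb; move: bnin; rewrite mem_cat -Eb Hu.
  - by case/orP => /eqP Eb; [move: bnin | move: b'nin]; rewrite ?inE mem_cat -Eb Hu ?orbT.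
  - by move/eqP => Eb; move: b'nin; rewrite inE mem_cat -Eb Hu ?orbT.
exists g'; split.
- move=> q; rewrite in_cons => /orP[/eqP ->|qin]; last by rewrite g'ps //; apply: V.
  rewrite g'q; split => //=.
  move: bin b'in; rewrite !inE => /andP[H1 H2] /andP[H3 H4].
  rewrite H1 H2 H3 H4 /=.
  by move: b'nin; rewrite inE negb_or eq_sym => /andP[].
- move=> q q'; rewrite !in_cons => /orP[/eqP ->|qin] /orP[/eqP ->|q'in] //; rewrite ?eqxx //.
  + move=> _ a b0; rewrite g'q g'ps // => H; apply/negP => H'.
    exact: (newd a b0 H (in_used q'in H')).
  + move=> _ a b0; rewrite g'q g'ps // => H; apply/negP => H'.
    exact: (newd a b0 H' (in_used qin H)).
  + by move=> nq; rewrite !g'ps //; apply: D.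
- move=> z0 Hz0 /=.
  rewrite (@eq_in_count _ _ (fun q => (g q).1.2 == z0)); last first.
    by move=> q qin /=; rewrite g'ps.
  rewrite g'q /=.
  case: (eqVneq z z0) => [<-|_]; first by rewrite add1n.
  by rewrite add0n C.
Qed.

End Greedy.

Section DRC.
Variables (A B : finType) (E : {set A * B}) (p : nat).

Definition NB (b : B) : {set A} := [set a | (a, b) \in E].
Definition bad (b : B) :=
  \sum_x \sum_y ((((x, b) \in E) && ((y, b) \in E) && (codeg E x y < 8 * p)) : nat).

Lemma sumNB : \sum_b #|NB b| = #|E|.
Proof.
rewrite (eq_bigr (fun b => \sum_a (((a, b) \in E) : nat))); last first.
  by move=> b _; rewrite card_sum.
rewrite exchange_big /= pair_bigA /=.
rewrite -[#|E|]sum1_card [RHS]big_mkcond /=; apply: eq_bigr => [[a b]] _ /=.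
by case: (_ \in E).
Qed.

Lemma codeg_sum x y : codeg E x y = \sum_b ((((x, b) \in E) && ((y, b) \in E)) : nat).
Proof. by rewrite /codeg -card_sum; apply: eq_card => b; rewrite !inE. Qed.

Lemma sumbad : \sum_b bad b <= #|A| * (#|A| * (8 * p)).
Proof.
have -> : \sum_b bad b = \sum_x \sum_y \sum_b
   ((((x, b) \in E) && ((y, b) \in E) && (codeg E x y < 8 * p)) : nat).
  rewrite /bad [LHS]exchange_big /=; apply: eq_bigr => x _; exact: exchange_big.
have C : forall (I : finType) c, \sum_(j : I) c = #|I| * c.
  by move=> I c; rewrite big_const iter_addn_0 mulnC.
rewrite -C; apply: leq_sum => x _; rewrite -C; apply: leq_sum => y _.
case: (ltnP (codeg E x y) (8 * p)) => h.
  by apply: ltnW; apply: leq_ltn_trans h; rewrite codeg_sum; apply: leq_sum => b _; rewrite andbT.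
by rewrite big1 // => b _; rewrite andbF.
Qed.

Lemma drc : 0 < p -> 0 < #|B| -> 192 * p * (#|A| * #|A|) * #|B| <= #|E| * #|E| ->
  exists b, #|E| * #|E| + 24 * (#|B| * #|B|) * bad b <= 2 * (#|B| * #|B|) * (#|NB b| * #|NB b|).
Proof.
move=> p0 n0 H2.
case: (boolP [exists b, #|E| * #|E| + 24 * (#|B| * #|B|) * bad b <=
                   2 * (#|B| * #|B|) * (#|NB b| * #|NB b|)]) => [/existsP//|/existsPn Hn].
exfalso.
have Hs : \sum_(b : B) (2 * (#|B| * #|B|) * (#|NB b| * #|NB b|) + 1) <=
          \sum_(b : B) (#|E| * #|E| + 24 * (#|B| * #|B|) * bad b).
  by apply: leq_sum => b _; rewrite addn1 ltnNge Hn.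
have C : forall (I : finType) c, \sum_(j : I) c = #|I| * c.
  by move=> I c; rewrite big_const iter_addn_0 mulnC.
move: Hs; rewrite big_split /= big_split /= -!big_distrr /= !C.
have CS1 := CS (fun b => #|NB b|); rewrite sumNB in CS1.
have SB := sumbad.
move: CS1 SB.
set X := \sum_i _. set Y := \sum_i bad i.
move=> CS1 SB Hs.
have h1 : #|B| * (#|E| * #|E|) <= #|B| * #|B| * X by rewrite -mulnA leq_mul2l CS1 orbT.
have h2 : 24 * (#|B| * #|B|) * Y <= #|B| * (#|E| * #|E|).
  apply: leq_trans (_ : 24 * (#|B| * #|B|) * (#|A| * (#|A| * (8 * p))) <= _).
    by rewrite leq_mul2l SB orbT.
  apply: leq_trans (_ : #|B| * (192 * p * (#|A| * #|A|) * #|B|) <= _); last by rewrite leq_mul2l H2 orbT.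
  nia.
have Hs' : 2 * (#|B| * #|B|) * X + #|B| <= #|E| * (#|B| * #|E|) + 24 * (#|B| * #|B|) * Y.
  by move: Hs; rewrite muln1.
clearbody X Y; move: Hs' h1 h2 n0; clear; generalize #|B| #|E| X Y => N M X0 Y0.
rewrite [M * (N * M)]mulnCA -[2 * (N * N) * X0]mulnA; generalize (N * (M * M)) (N * N * X0) (24 * (N * N) * Y0) => a b c; lia.
Qed.

Lemma S_props : 0 < p -> 0 < #|B| -> 16 * p * #|B| <= #|E| ->
  192 * p * (#|A| * #|A|) * #|B| <= #|E| * #|E| ->
  exists S : {set A}, 11 * p <= #|S| /\ 12 * \sum_(x in S) #|Bad E p S x| <= #|S| * #|S|.
Proof.
move=> p0 n0 H1 H2.
have [b Hb] := drc p0 n0 H2.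
exists (NB b).
have Eq : \sum_(x in NB b) #|Bad E p (NB b) x| = bad b.
  rewrite /bad big_mkcond /=; apply: eq_bigr => x _; rewrite /Bad card_sum.
  case xin: (x \in NB b).
    by apply: eq_bigr => y _; move: xin; rewrite !inE => ->.
  by rewrite big1 // => y _; move: xin; rewrite !inE => ->.
rewrite Eq.
move: Hb H1; set N := #|B|; set m := #|E|; set s := #|NB b|; set be := bad b => Hb H1.
have Hm : (16 * p * N) * (16 * p * N) <= m * m by apply: leq_mul.
have Q1 : (N * N) * (128 * (p * p)) <= (N * N) * (s * s) by nia.
have Q2 : (N * N) * (12 * be) <= (N * N) * (s * s) by nia.
have NN : 0 < N * N by rewrite muln_gt0 n0.
rewrite leq_pmul2l // in Q1; rewrite leq_pmul2l // in Q2.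
split => //.
rewrite leqNgt; apply/negP => h.
have : s * s < (11 * p) * (11 * p) by apply: ltn_mul.
nia.
Qed.

Lemma T_big (S : {set A}) : 0 < p -> 11 * p <= #|S| ->
  12 * \sum_(x in S) #|Bad E p S x| <= #|S| * #|S| ->
  p <= #|[set x in S | 6 * #|Bad E p S x| <= #|S|]|.
Proof.
move=> p0 HS Hsum.
set T := [set x in S | _].
set H := S :\: T.
have HT : #|T| + #|H| = #|S|.
  rewrite -(cardsID T S); congr (_ + _); apply: eq_card => x.
  by rewrite !inE; case: (x \in S); rewrite ?andbT ?andbF.
have HH : #|H| * (#|S|.+1) <= 6 * \sum_(x in S) #|Bad E p S x|.
  rewrite (bigID (mem T)) /= mulnDr.
  apply: leq_trans (leq_addl _ _).
  rewrite -sum_nat_const big_distrr /=.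
  rewrite (eq_bigl (fun x => (x \in S) && (x \notin T))); last first.
    by move=> x; rewrite /H !inE andbC.
  apply: leq_sum => x /andP[xS xT].
  by move: xT; rewrite /T inE xS /= -ltnNge.
nia.
Qed.

End DRC.

Lemma edge_eq (A B : finType) (a a' : A) (b b' : B) :
  [set (inl a : (A + B)%type); inr b] = [set inl a'; inr b'] -> a = a' /\ b = b'.
Proof.
move=> H.
have h1 : (inl a : (A + B)%type) \in [set inl a'; inr b'] by rewrite -H !inE eqxx.
have h2 : (inr b : (A + B)%type) \in [set inl a'; inr b'] by rewrite -H !inE eqxx orbT.
move: h1 h2; rewrite !inE => /orP[/eqP[->]|/eqP//] /orP[/eqP//|/eqP[->]] //.
Qed.

Lemma walk_Ed (A B : finType) (p : nat) (phi : 'I_p -> A) (i j : 'I_p) (t : B * A * B) ed :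
  ed \in walk_edges (inl (phi i)) [:: inr t.1.1; inl t.1.2; inr t.2; inl (phi j)] ->
  exists a b0, ed = [set inl a; inr b0] /\ b0 \in Ed phi a (i, j) t.
Proof.
have sw : forall (a : A) (b : B), [set (inr b : (A + B)%type); inl a] = [set inl a; inr b].
  by move=> a b; rewrite setUC.
rewrite /walk_edges /= !inE => /orP[/eqP->|/orP[/eqP->|/orP[/eqP->|/eqP->]]].
- exists (phi i), t.1.1; split => //; by rewrite /Ed !mem_cat eqxx inE eqxx.
- exists t.1.2, t.1.1; rewrite sw; split => //; by rewrite /Ed !mem_cat eqxx !inE eqxx orbT.
- exists t.1.2, t.2; split => //; by rewrite /Ed !mem_cat eqxx !inE eqxx !orbT.
- exists (phi j), t.2; rewrite sw; split => //; by rewrite /Ed !mem_cat eqxx !inE eqxx !orbT.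
Qed.

Lemma main_nat (A B : finType) (E : {set A * B}) (p : nat) :
  0 < p -> 0 < #|B| -> 16 * p * #|B| <= #|E| ->
  192 * p * (#|A| * #|A|) * #|B| <= #|E| * #|E| ->
  K3_immersion (bip_adj E) p.
Proof.
move=> p0 n0 H1 H2.
have [S [HS Hsum]] := S_props p0 n0 H1 H2.
have HT := T_big p0 HS Hsum.
set T := [set x in S | _] in HT.
pose phi (i : 'I_p) : A := enum_val (widen_ord HT i).
have phi_inj : injective phi.
  by move=> i j /enum_val_inj /(congr1 val) /= /val_inj.
have phiT : forall i, 6 * #|Bad E p S (phi i)| <= #|S|.
  by move=> i; have := enum_valP (widen_ord HT i); rewrite inE => /andP[].
have [[a0 b0] _] : exists e, e \in E.
  by apply/card_gt0P; apply: leq_trans H1; rewrite !muln_gt0 p0 n0.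
have Hmid : forall (i j : 'I_p) (f : 'I_p * 'I_p -> A) (ps : seq ('I_p * 'I_p)),
  size ps <= p * p -> exists z, [/\ (forall k, z != phi k), 8 * p <= codeg E (phi i) z,
    8 * p <= codeg E z (phi j) & count (fun q => f q == z) ps < 2 * p].
  by move=> i j f ps Hps; apply: (@mid_exists _ _ E p phi S) => //; apply: phiT.
set ps := filter (fun q : 'I_p * 'I_p => q.1 < q.2) (enum {: 'I_p * 'I_p}).
have U : uniq ps by rewrite filter_uniq // enum_uniq.
have [g [V D _]] := greedy phi_inj (b0, a0, b0) Hmid U.
have inps : forall i j : 'I_p, i < j -> (i, j) \in ps.
  by move=> i j hij; rewrite mem_filter mem_enum /= hij.
exists (fun i => inl (phi i)); split.
  by move=> i j [] /phi_inj.
exists (fun i j => [:: inr (g (i, j)).1.1; inl (g (i, j)).1.2; inr (g (i, j)).2; inl (phi j)]).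
split.
- move=> i j hij.
  have [V1 V2] := V _ (inps i j hij).
  move: V1 (V2 i) (V2 j); case: (g (i, j)) => [[b z] b'] /= /and5P[e1 e2 e3 e4 bb'] zi zj.
  have ij : phi i != phi j.
    by rewrite (inj_eq phi_inj); apply/negP => /eqP E'; rewrite E' ltnn in hij.
  split => //=.
  + by rewrite e1 e2 e3 e4.
  + have eL : forall x y : A, (inl x == inl y :> (A + B)%type) = (x == y).
      by move=> x y; apply/eqP/eqP => [[]|->].
    have eR : forall x y : B, (inr x == inr y :> (A + B)%type) = (x == y).
      by move=> x y; apply/eqP/eqP => [[]|->].
    have eRL : forall (x : B) (y : A), (inr x == inl y :> (A + B)%type) = false.
      by [].
    rewrite !inE /= !eL eR eRL [phi i == z]eq_sym (negbTE zi) (negbTE ij) (negbTE zj) (negbTE bb').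
    done.
- move=> i j i' j' hij hij' neq ed H; apply/negP => H'.
  have [a [b1 [Eed Hb1]]] := walk_Ed H.
  have [a' [b2 [Ee Hb2]]] := walk_Ed H'.
  have [Ea Eb] := edge_eq (etrans (esym Eed) Ee); subst a' b2.
  by move: (D _ _ (inps i j hij) (inps i' j' hij') neq a b1 Hb1); rewrite Hb2.
Qed.

Import Order.TTheory GRing.Theory Num.Theory.

Theorem lemma5p4 (A B : finType) (E : {set A * B}) (p : nat) :
  let n1 := #|A| in let n2 := #|B| in
  let alpha : rat := (#|E|%:R / (n1 * n2)%:R)%R in
  (p%:R <= Num.min (alpha * n1%:R / 16%:R) (alpha ^+ 2 * n2%:R / 192%:R))%R ->
  K3_immersion (bip_adj E) p.
Proof.
move=> n1 n2 alpha Hp.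
case: (posnP p) => [->|p0].
  have f : 'I_0 -> (A + B)%type by case=> m; rewrite ltn0.
  exists f; split; first by case.
  by exists (fun _ _ => [::]); split; case.
rewrite le_min in Hp; case/andP: Hp => Ha Hb.
have nn : 0 < n1 * n2.
  case: (posnP (n1 * n2)) => // h.
  move: Ha; rewrite /alpha h invr0 mulr0 !mul0r => Ha.
  have : (p <= 0)%N by rewrite -(ler_nat rat).
  by rewrite leqn0 => /eqP E0; rewrite E0 in p0.
have n10 : 0 < n1 by move: nn; rewrite muln_gt0 => /andP[].
have n20 : 0 < n2 by move: nn; rewrite muln_gt0 => /andP[].
have n1R : (n1%:R : rat) != 0%R by rewrite pnatr_eq0 -lt0n.
have n2R : (n2%:R : rat) != 0%R by rewrite pnatr_eq0 -lt0n.
have e1 : (alpha * n1%:R / 16%:R = #|E|%:R / (16 * n2)%:R :> rat)%R.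
  rewrite /alpha !natrM; field; rewrite ?n1R ?n2R //.
have e2 : (alpha ^+ 2 * n2%:R / 192%:R = (#|E| * #|E|)%:R / (192 * (n1 * n1) * n2)%:R :> rat)%R.
  rewrite /alpha !natrM; field; rewrite ?n1R ?n2R //.
rewrite e1 ler_pdivlMr ?ltr0n ?muln_gt0 ?n20 // -natrM ler_nat in Ha.
rewrite e2 ler_pdivlMr ?ltr0n ?muln_gt0 ?n10 ?n20 // -natrM ler_nat in Hb.
apply: main_nat => //.
  by move: Ha; rewrite /n2; lia.
by move: Hb; rewrite /n1 /n2; lia.
Qed.
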